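(* Let $\mathcal{F}=(V_m,\eta_m)_{m=1}^4$ be a tetrahedron of flags in $\mathbb{RP}^3$. The following are equivalent: (1) $\mathcal{F}$ is an inscribed tetrahedron of flags (of hyperbolic, Anti-de Sitter or half-pipe type); (2) $t^{\mathcal{F}}_\sigma=1$ for all edge-faces $\sigma$; (3) $e^{\mathcal{F}}_\sigma=e^{\mathcal{F}}_{\mathrm{op}\,\sigma}$ for all edge-faces $\sigma$. Moreover, in this case, for any edge-face $\sigma$, $\mathcal{F}$ is of hyperbolic type if $j_\sigma>0$, of Anti-de Sitter type if $j_\sigma<0$, and of half-pipe type if $j_\sigma=0$, where $j_\sigma=e_\sigma-X_\sigma^2$.
   Context: Flags: $(V,\eta)$, $\eta$ a plane of $\mathbb{RP}^3$ through $V$. A tetrahedron of flags is a non-degenerate ($\eta_i(V_j)=0\iff i=j$) ordered quadruple $(V_m,\eta_m)_{m=1}^4$ with $V_m$ not coplanar such that some projective tetrahedron with vertices $V_m$ has interior disjoint from all $\eta_m$. Edge-faces $\sigma=(ij)k$ are even permutations $[ijkl]$ of $\{1,2,3,4\}$; $\sigma_+=(ki)j$, $\sigma_-=(jk)i$, $\mathrm{op}\,\sigma=(lk)j$. Triple ratio $t_\sigma=\frac{\bar\eta_i(\bar V_j)\bar\eta_j(\bar V_k)\bar\eta_k(\bar V_i)}{\bar\eta_i(\bar V_k)\bar\eta_j(\bar V_i)\bar\eta_k(\bar V_j)}$, edge ratio $e_\sigma=\frac{\bar\eta_i(\bar V_k)\bar\eta_j(\bar V_l)}{\bar\eta_i(\bar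 V_l)\bar\eta_j(\bar V_k)}$; $\mu_\sigma=e_{\sigma_-}e_{\sigma_+}-e_{\sigma_-}+1$, $X_\sigma=\mu_\sigma t_\sigma e_\sigma/(t_\sigma+1)$. Let $B$ be a symmetric bilinear form on $\mathbb{R}^4$ which is either nondegenerate of signature $(3,1)$ (hyperbolic type), nondegenerate of signature $(2,2)$ (Anti-de Sitter type), or degenerate with one-dimensional radical and of signature $(2,1)$ on the quotient by the radical (half-pipe type); let $\mathbb{X}_B=\{[v]:B(v,v)<0\}$. $\mathcal{F}$ is inscribed in $\mathbb{X}_B$ if there is a projective tetrahedron with vertices $V_1,\dots,V_4$ with interior contained in $\mathbb{X}_B$, each $V_m=[v_m]$ satisfies $B(v_m,v_m)=0$ and $v_m$ not in the radical, and $\eta_m=[B(v_m,\cdot)]$ is the tangent plane to the quadric at $V_m$. $\mathcal{F}$ is an inscribed tetrahedron of flags of the corresponding type if it is inscribed in $\mathbb{X}_B$ for some such $B$. *)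

(* Defs.v *)
(* RP^3 is modelled over an arbitrary real closed field R
   (the statement is first-order, so over R = the reals by transfer). *)
From HB Require Import structures.
From mathcomp Require Import all_boot all_order all_algebra all_fingroup.
Set Implicit Arguments. Unset Strict Implicit. Unset Printing Implicit Defensive.
Import Order.TTheory GRing.Theory Num.Theory.
Local Open Scope ring_scope.

Section TetraDefs.
Variable R : rcfType.

(* Points of RP^3 are given by lifts v : 'rV_4 (nonzero row vectors),
   planes by lifts eta : 'rV_4 (nonzero covectors); eta(v) is the pairing. *)
Definition pair (eta v : 'rV[R]_4) : R := (eta *m v^T) 0 0.

Definition is_flag (v eta : 'rV[R]_4) : Prop :=
  v != 0 /\ eta != 0 /\ pair eta v = 0.

(* Interior of the projective tetrahedron with vertices [v m] determined by
   the lifts c m *: v m (c m <> 0): points [sum_m a_m c_m v_m], all a_m > 0. *)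
Definition tpoint (v : 'I_4 -> 'rV[R]_4) (c a : 'I_4 -> R) : 'rV[R]_4 :=
  \sum_(m < 4) (a m * c m) *: v m.

Definition tetra_of_flags (v eta : 'I_4 -> 'rV[R]_4) : Prop :=
  (forall m, is_flag (v m) (eta m)) /\
  (forall i j, pair (eta i) (v j) = 0 <-> i = j) /\
  ~ (exists e : 'rV[R]_4, e != 0 /\ forall m, pair e (v m) = 0) /\
  (* some projective tetrahedron with vertices V_m has interior
     disjoint from all the planes eta_m *)
  (exists c : 'I_4 -> R, (forall m, c m != 0) /\
     forall a : 'I_4 -> R, (forall m, 0 < a m) ->
       forall m, pair (eta m) (tpoint v c a) != 0).

Definition bform (B : 'M[R]_4) (x y : 'rV[R]_4) : R := (x *m B *m y^T) 0 0.

Definition sig_diag (p q : nat) : 'M[R]_4 :=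
  diag_mx (\row_(i < 4) if (i < p)%N then 1 else if (i < p + q)%N then -1 else 0).

(* B is symmetric of signature (p, q) (and rank p + q), via Sylvester's
   normal form: B is congruent to sig_diag p q. *)
Definition has_signature (B : 'M[R]_4) (p q : nat) : Prop :=
  B^T = B /\ exists P : 'M[R]_4, P \in unitmx /\ P *m B *m P^T = sig_diag p q.

Definition hyperbolic_form B := has_signature B 3 1.
Definition AdS_form B := has_signature B 2 2.
(* half-pipe type: one-dimensional radical, signature (2,1) on the quotient *)
Definition halfpipe_form B := has_signature B 2 1.

(* F is inscribed in X_B = {[x] : B(x,x) < 0}. *)
Definition inscribed_in (B : 'M[R]_4) (v eta : 'I_4 -> 'rV[R]_4) : Prop :=
  (exists c : 'I_4 -> R, (forall m, c m != 0) /\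
     forall a : 'I_4 -> R, (forall m, 0 < a m) ->
       bform B (tpoint v c a) (tpoint v c a) < 0) /\
  (forall m, bform B (v m) (v m) = 0) /\
  (forall m, v m *m B != 0) /\
  (forall m, exists lam : R, lam != 0 /\ eta m = lam *: (v m *m B)).

Definition inscribed_hyperbolic v eta :=
  exists B, hyperbolic_form B /\ inscribed_in B v eta.
Definition inscribed_AdS v eta :=
  exists B, AdS_form B /\ inscribed_in B v eta.
Definition inscribed_halfpipe v eta :=
  exists B, halfpipe_form B /\ inscribed_in B v eta.

Definition inscribed_tetra v eta :=
  inscribed_hyperbolic v eta \/ inscribed_AdS v eta \/ inscribed_halfpipe v eta.

Section Ratios.
Variables (v eta : 'I_4 -> 'rV[R]_4).
Definition ev (i j : 'I_4) : R := pair (eta i) (v j).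

Definition triple_ratio (i j k : 'I_4) : R :=
  (ev i j * ev j k * ev k i) / (ev i k * ev j i * ev k j).
Definition edge_ratio (i j k l : 'I_4) : R :=
  (ev i k * ev j l) / (ev i l * ev j k).
End Ratios.

(* Edge-faces sigma = (ij)k <-> even permutations s = [ijkl]:
   i = s 0, j = s 1, k = s 2, l = s 3. *)
Definition o0 : 'I_4 := @Ordinal 4 0 isT.
Definition o1 : 'I_4 := @Ordinal 4 1 isT.
Definition o2 : 'I_4 := @Ordinal 4 2 isT.
Definition o3 : 'I_4 := @Ordinal 4 3 isT.

Section EdgeFace.
Variables (v eta : 'I_4 -> 'rV[R]_4) (s : {perm 'I_4}).
Let i := s o0. Let j := s o1. Let k := s o2. Let l := s o3.
Definition t_sigma : R := triple_ratio v eta i j k.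
Definition e_sigma : R := edge_ratio v eta i j k l.
(* sigma_+ = (ki)j = [kijl], sigma_- = (jk)i = [jkil], op sigma = (lk)j = [lkji] *)
Definition e_plus : R := edge_ratio v eta k i j l.
Definition e_minus : R := edge_ratio v eta j k i l.
Definition e_op : R := edge_ratio v eta l k j i.
Definition mu_sigma : R := e_minus * e_plus - e_minus + 1.
Definition X_sigma : R := mu_sigma * t_sigma * e_sigma / (t_sigma + 1).
Definition j_sigma : R := e_sigma - X_sigma ^+ 2.
End EdgeFace.

End TetraDefs.

(* Main.v *)
Require Import Defs.
From HB Require Import structures.
From mathcomp Require Import all_boot all_order all_algebra all_fingroup.
From mathcomp Require Import ring lra.
Set Implicit Arguments. Unset Strict Implicit. Unset Printing Implicit Defensive.
Import Order.TTheory GRing.Theory Num.Theory.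
Local Open Scope ring_scope.
Section SigPart.
Variable R : rcfType.
Definition mx4 (L : seq (seq R)) : 'M[R]_4 := \matrix_(i<4,j<4) nth 0 (nth [::] L i) j.
Definition diag4 (x0 x1 x2 x3 : R) := mx4 [:: [:: x0; 0; 0; 0]; [:: 0; x1; 0; 0]; [:: 0; 0; x2; 0]; [:: 0; 0; 0; x3]].
Lemma sum4 (F : 'I_4 -> R) : \sum_(i<4) F i = F (@Ordinal 4 0 isT) + F (@Ordinal 4 1 isT) + F (@Ordinal 4 2 isT) + F (@Ordinal 4 3 isT).
Proof. rewrite !big_ord_recr big_ord0 /= add0r. by congr (_+_+_+_); congr F; apply: val_inj. Qed.

Lemma diag4_mul (g0 g1 g2 g3 d0 d1 d2 d3 : R) :
  diag4 g0 g1 g2 g3 *m diag4 d0 d1 d2 d3 *m (diag4 g0 g1 g2 g3)^T =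
  diag4 (g0^+2*d0) (g1^+2*d1) (g2^+2*d2) (g3^+2*d3).
Proof.
rewrite /diag4 /mx4; apply/matrixP => i j; rewrite !(mxE, sum4) /=.
by case: i => [[|[|[|[|i]]]] Hi] //=; case: j => [[|[|[|[|j]]]] Hj] //=; ring.
Qed.

Lemma diag4_unit (g0 g1 g2 g3 : R) : g0 != 0 -> g1 != 0 -> g2 != 0 -> g3 != 0 ->
  diag4 g0 g1 g2 g3 \in unitmx.
Proof.
move=> h0 h1 h2 h3.
have [] // := @mulmx1_unit _ _ (diag4 g0^-1 g1^-1 g2^-1 g3^-1) (diag4 g0 g1 g2 g3).
rewrite /diag4 /mx4; apply/matrixP => i j; rewrite !(mxE, sum4) /=.
case: i => [[|[|[|[|i]]]] Hi] //=; case: j => [[|[|[|[|j]]]] Hj] //=; rewrite ?mulVf //; ring.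
Qed.

Lemma sig31 : sig_diag R 3 1 = diag4 1 1 1 (-1).
Proof.
rewrite /sig_diag /diag4 /mx4; apply/matrixP => i j; rewrite !mxE /=.
by case: i => [[|[|[|[|i]]]] Hi] //=; case: j => [[|[|[|[|j]]]] Hj] //=.
Qed.
Lemma sig22 : sig_diag R 2 2 = diag4 1 1 (-1) (-1).
Proof.
rewrite /sig_diag /diag4 /mx4; apply/matrixP => i j; rewrite !mxE /=.
by case: i => [[|[|[|[|i]]]] Hi] //=; case: j => [[|[|[|[|j]]]] Hj] //=.
Qed.
Lemma sig21 : sig_diag R 2 1 = diag4 1 1 (-1) 0.
Proof.
rewrite /sig_diag /diag4 /mx4; apply/matrixP => i j; rewrite !mxE /=.
by case: i => [[|[|[|[|i]]]] Hi] //=; case: j => [[|[|[|[|j]]]] Hj] //=.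
Qed.
End SigPart.
Section SigMain.
Variable R : rcfType.
Variables a b c d e f : R.
Hypotheses (ha : 0 < a) (hb : 0 < b) (hc : 0 < c) (hd : 0 < d) (he : 0 < e) (hf : 0 < f).
Definition Nmx := mx4 [:: [:: 0; -a; -b; -c]; [:: -a; 0; -d; -e]; [:: -b; -d; 0; -f]; [:: -c; -e; -f; 0]].
Definition Dlt := (a*f)^+2 + (b*e)^+2 + (c*d)^+2 - 2*(a*f)*(b*e) - 2*(b*e)*(c*d) - 2*(c*d)*(a*f).
Let p := 2*b*d/a.
Let r := (c*d+b*e)/a - f.
Let q := - Dlt / (2*a*b*d).
Let u4 := [:: -e/a + r/p*(d/a); -c/a + r/p*(b/a); -(r/p); 1].
Definition U0b := mx4 [:: [:: 1; -1; 0; 0]; [:: -d/a; -b/a; 1; 0]; [:: 1; 1; 0; 0]; u4].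
Definition U0a := mx4 [:: [:: 1; -1; 0; 0]; [:: -d/a; -b/a; 1; 0]; u4; [:: 1; 1; 0; 0]].
Let a0 : a != 0. Proof. by rewrite gt_eqF. Qed.
Let b0 : b != 0. Proof. by rewrite gt_eqF. Qed.
Let d0 : d != 0. Proof. by rewrite gt_eqF. Qed.

Lemma Ub_diag : U0b *m Nmx *m U0b^T = diag4 (2*a) p (-(2*a)) q.
Proof.
rewrite /U0b /Nmx /diag4 /u4 /mx4; apply/matrixP => i j; rewrite !(mxE, sum4) /=.
case: i => [[|[|[|[|i]]]] Hi] //=; case: j => [[|[|[|[|j]]]] Hj] //=.
all: rewrite /p /r /q /Dlt; field; by rewrite ?a0 ?b0 ?d0.
Qed.
Lemma Ua_diag : U0a *m Nmx *m U0a^T = diag4 (2*a) p q (-(2*a)).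
Proof.
rewrite /U0a /Nmx /diag4 /u4 /mx4; apply/matrixP => i j; rewrite !(mxE, sum4) /=.
case: i => [[|[|[|[|i]]]] Hi] //=; case: j => [[|[|[|[|j]]]] Hj] //=.
all: rewrite /p /r /q /Dlt; field; by rewrite ?a0 ?b0 ?d0.
Qed.
Lemma Ub_unit : U0b \in unitmx.
Proof.
have [] // := @mulmx1_unit _ _ (mx4 [:: [:: 1/2; 0; 1/2; 0]; [:: -1/2; 0; 1/2; 0];
   [:: (d-b)/(2*a); 1; (d+b)/(2*a); 0]; [:: (e-c)/(2*a); r/p; (e+c)/(2*a); 1]]) U0b.
rewrite /U0b /u4 /mx4; apply/matrixP => i j; rewrite !(mxE, sum4) /=.
case: i => [[|[|[|[|i]]]] Hi] //=; case: j => [[|[|[|[|j]]]] Hj] //=.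
all: rewrite /p /r; field; by rewrite ?a0 ?b0 ?d0.
Qed.
Lemma Ua_unit : U0a \in unitmx.
Proof.
have [] // := @mulmx1_unit _ _ (mx4 [:: [:: 1/2; 0; 0; 1/2]; [:: -1/2; 0; 0; 1/2];
   [:: (d-b)/(2*a); 1; 0; (d+b)/(2*a)]; [:: (e-c)/(2*a); r/p; 1; (e+c)/(2*a)]]) U0a.
rewrite /U0a /u4 /mx4; apply/matrixP => i j; rewrite !(mxE, sum4) /=.
case: i => [[|[|[|[|i]]]] Hi] //=; case: j => [[|[|[|[|j]]]] Hj] //=.
all: rewrite /p /r; field; by rewrite ?a0 ?b0 ?d0.
Qed.

Lemma sq_inv (x : R) : 0 < x -> (Num.sqrt x)^-1 ^+ 2 * x = 1.
Proof. by move=> hx; rewrite exprVn sqr_sqrtr ?ltW // mulVf // gt_eqF. Qed.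

Lemma sq_invN (x : R) : 0 < - x -> (Num.sqrt (- x))^-1 ^+ 2 * x = -1.
Proof. by move=> hx; apply: oppr_inj; rewrite -mulrN sq_inv // opprK. Qed.

Lemma congr_help (Dg U0 N : 'M[R]_4) :
  (Dg *m U0) *m N *m (Dg *m U0)^T = Dg *m (U0 *m N *m U0^T) *m Dg^T.
Proof. by rewrite trmx_mul !mulmxA. Qed.

Lemma sqrt_inv_neq0 (x : R) : 0 < x -> (Num.sqrt x)^-1 != 0.
Proof. by move=> hx; rewrite invr_eq0 gt_eqF // sqrtr_gt0. Qed.

Lemma p_gt0 : 0 < p.
Proof. by rewrite /p divr_gt0 // !mulr_gt0. Qed.

Lemma sig_main :
  (Dlt < 0 -> exists U, U \in unitmx /\ U *m Nmx *m U^T = sig_diag R 3 1) /\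
  (0 < Dlt -> exists U, U \in unitmx /\ U *m Nmx *m U^T = sig_diag R 2 2) /\
  (Dlt = 0 -> exists U, U \in unitmx /\ U *m Nmx *m U^T = sig_diag R 2 1).
Proof.
have h2a : 0 < 2 * a by rewrite mulr_gt0.
have habd : 0 < 2 * a * b * d by rewrite !mulr_gt0.
have hp := p_gt0.
split; [|split].
- move=> hD; have hq : 0 < q by rewrite /q divr_gt0 // oppr_gt0.
  exists (diag4 (Num.sqrt (2*a))^-1 (Num.sqrt p)^-1 (Num.sqrt q)^-1 (Num.sqrt (2*a))^-1 *m U0a).
  split; first by rewrite unitmx_mul Ua_unit diag4_unit // sqrt_inv_neq0.
  rewrite congr_help Ua_diag diag4_mul sig31 !sq_inv //.
  by rewrite mulrN sq_inv.
- move=> hD; have hq : 0 < - q by rewrite /q mulNr opprK divr_gt0.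
  exists (diag4 (Num.sqrt (2*a))^-1 (Num.sqrt p)^-1 (Num.sqrt (2*a))^-1 (Num.sqrt (-q))^-1 *m U0b).
  split; first by rewrite unitmx_mul Ub_unit diag4_unit // sqrt_inv_neq0.
  rewrite congr_help Ub_diag diag4_mul sig22 !sq_inv //.
  by rewrite mulrN sq_inv // sq_invN.
- move=> hD; have hq : q = 0 by rewrite /q hD oppr0 mul0r.
  exists (diag4 (Num.sqrt (2*a))^-1 (Num.sqrt p)^-1 (Num.sqrt (2*a))^-1 1 *m U0b).
  split; first by rewrite unitmx_mul Ub_unit diag4_unit ?oner_neq0 // sqrt_inv_neq0.
  by rewrite congr_help Ub_diag diag4_mul sig21 !sq_inv // hq mulr0 mulrN sq_inv.
Qed.
End SigMain.
Section PartB.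
Variable R : rcfType.

Lemma ord4_cases (i : 'I_4) : i = o0 \/ i = o1 \/ i = o2 \/ i = o3.
Proof.
case: i => [[|[|[|[|i]]]] Hi].
- by left; apply: val_inj.
- by right; left; apply: val_inj.
- by right; right; left; apply: val_inj.
- by right; right; right; apply: val_inj.
- by [].
Qed.

Lemma pairE (e w : 'rV[R]_4) : pair e w = \sum_x e 0 x * w 0 x.
Proof. by rewrite /pair !mxE; apply: eq_bigr => x _; rewrite mxE. Qed.

Lemma pair_sum (e : 'rV[R]_4) (x : 'I_4 -> R) (w : 'I_4 -> 'rV[R]_4) :
  pair e (\sum_k x k *: w k) = \sum_k x k * pair e (w k).
Proof.
rewrite pairE.
under eq_bigr => y _ do rewrite summxE big_distrr /=.
rewrite exchange_big /=; apply: eq_bigr => k _.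
rewrite pairE big_distrr /=; apply: eq_bigr => y _.
by rewrite !mxE mulrCA.
Qed.

Lemma same_sign (w : 'I_4 -> R) :
  (forall a : 'I_4 -> R, (forall m, 0 < a m) -> \sum_m a m * w m != 0) ->
  forall j k, 0 <= w j * w k.
Proof.
move=> H.
suff key : forall j k, 0 < w j -> w k < 0 -> False.
  move=> j k; case: (ltrgtP (w j) 0) => hj; case: (ltrgtP (w k) 0) => hk;
    rewrite ?hj ?hk ?mul0r ?mulr0 //.
  - by rewrite nmulr_rge0 // ltW.
  - by case: (key k j).
  - by case: (key j k).
  - by rewrite mulr_ge0 // ltW.
move=> j k hj hk.
set T := \sum_m w m.
have [al [be [hA [hB hsum]]]] : exists al be, 0 <= al /\ 0 <= be /\ T + al * w j + be * w k = 0.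
  case: (lerP 0 T) => hT.
  - exists 0, (T / - w k); split => //; split; first by apply: divr_ge0 => //; rewrite oppr_ge0; exact: ltW.
    by field; rewrite ?oppr_eq0 lt_eqF.
  - exists (- T / w j), 0; split; first by apply: divr_ge0; [rewrite oppr_ge0; exact: ltW | exact: ltW].
    split => //; by field; rewrite gt_eqF.
pose a m := 1 + (if m == j then al else 0) + (if m == k then be else 0).
have ha : forall m, 0 < a m.
  move=> m; rewrite /a; case: (m == j); case: (m == k) => /=; lra.
have := H a ha; rewrite /a.
have -> : \sum_m (1 + (if m == j then al else 0) + (if m == k then be else 0)) * w m
   = T + al * w j + be * w k.
  transitivity (\sum_m (w m + ((if m == j then al * w m else 0) + (if m == k then be * w m else 0)))).
    by apply: eq_bigr => m _; case: (m == j); case: (m == k); rewrite /=; ring.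
  rewrite big_split big_split /= -!big_mkcond /= !big_pred1_eq /T.
  by rewrite addrA.
by rewrite hsum eqxx.
Qed.
End PartB.
Section PartC.
Variable R : rcfType.
Variables v eta : 'I_4 -> 'rV[R]_4.
Hypothesis htet : tetra_of_flags v eta.

Definition Wm (c : 'I_4 -> R) : 'M[R]_4 := \matrix_(i < 4, j < 4) (c i * v i 0 j).

Lemma G_diag i : ev v eta i i = 0.
Proof. by case: htet => _ [hnd _]; apply/(hnd i i). Qed.

Lemma G_nz i j : i != j -> ev v eta i j != 0.
Proof.
move=> hij; case: htet => _ [hnd _]; apply/eqP => h.
by move/(hnd i j): h => h; rewrite h eqxx in hij.
Qed.

Lemma Wm_entry (c : 'I_4 -> R) (e : 'rV[R]_4) m : (e *m (Wm c)^T) 0 m = c m * pair e (v m).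
Proof.
rewrite !mxE pairE big_distrr /=; apply: eq_bigr => x _.
by rewrite !mxE mulrCA.
Qed.

Lemma Wm_unit (c : 'I_4 -> R) : (forall m, c m != 0) -> Wm c \in unitmx.
Proof.
move=> hc; rewrite unitmxE unitfE; apply/negP => /eqP hd.
case: htet => _ [_ [hnc _]]; apply: hnc.
have : \det (Wm c)^T == 0 by rewrite det_tr hd.
case/det0P => e he0 he; exists e; split => // m.
have := Wm_entry c e m; rewrite he mxE => /esym /eqP.
by rewrite mulf_eq0 (negbTE (hc m)) /= => /eqP.
Qed.

Lemma tetra_signs : exists c : 'I_4 -> R, (forall m, c m != 0) /\
  (forall m j k, j != m -> k != m -> 0 < (c j * ev v eta m j) * (c k * ev v eta m k)).
Proof.
case: htet => _ [_ [_ [c [hc hint]]]].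
exists c; split => // m j k hj hk.
have hss := @same_sign R (fun k => c k * ev v eta m k).
have h1 : c j * ev v eta m j != 0 by rewrite mulf_neq0 // G_nz // eq_sym.
have h2 : c k * ev v eta m k != 0 by rewrite mulf_neq0 // G_nz // eq_sym.
rewrite lt_def mulf_neq0 //=; apply: hss => a ha; have := hint a ha m.
rewrite /tpoint pair_sum.
by under eq_bigr => x _ do rewrite -mulrA.
Qed.
End PartC.
Section PartD.
Variable R : rcfType.
Variables (G : 'I_4 -> 'I_4 -> R) (c : 'I_4 -> R).
Hypotheses (hGd : forall i, G i i = 0) (hGn : forall i j, i != j -> G i j != 0)
  (hc : forall m, c m != 0)
  (hsg : forall m j k, j != m -> k != m -> 0 < (c j * G m j) * (c k * G m k)).
Definition Tr i j k := G i j * G j k * G k i / (G i k * G j i * G k j).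
Hypotheses (ht1 : Tr o0 o1 o2 = 1) (ht2 : Tr o0 o2 o3 = 1) (ht3 : Tr o0 o3 o1 = 1).

Lemma Tr_eq i j k : i != j -> j != k -> k != i -> Tr i j k = 1 ->
  G i j * G j k * G k i = G i k * G j i * G k j.
Proof.
move=> hij hjk hki; rewrite /Tr => h.
have hden : G i k * G j i * G k j != 0.
  by rewrite !mulf_neq0 ?hGn // eq_sym.
by have := mulfVK hden (G i j * G j k * G k i); rewrite h mul1r.
Qed.

Lemma mu_exists : exists mu : 'I_4 -> R, (forall i, mu i != 0) /\
  forall i j, G i j / mu i = G j i / mu j.
Proof.
have P1 := @Tr_eq o0 o1 o2 isT isT isT ht1.
have P2 := @Tr_eq o0 o2 o3 isT isT isT ht2.
have P3 := @Tr_eq o0 o3 o1 isT isT isT ht3.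
have e1 : G o2 o1 = G o0 o1 * G o1 o2 * G o2 o0 / (G o0 o2 * G o1 o0).
  by rewrite P1; field; rewrite ?hGn.
have e2' : G o3 o1 = G o0 o1 * G o3 o0 * G o1 o3 / (G o0 o3 * G o1 o0).
  by rewrite -P3; field; rewrite ?hGn.
have e3 : G o3 o2 = G o0 o2 * G o2 o3 * G o3 o0 / (G o0 o3 * G o2 o0).
  by rewrite P2; field; rewrite ?hGn.
exists (fun i => if i == o0 then 1 else G i o0 / G o0 i); split.
  move=> i; case: ifP => hi; first exact: oner_neq0.
  have hi' : i != o0 by rewrite hi.
  by apply: mulf_neq0; [apply: hGn | rewrite invr_eq0; apply: hGn; rewrite eq_sym].
move=> i j.
case: (ord4_cases i) => [->|[->|[->|->]]]; case: (ord4_cases j) => [->|[->|[->|->]]] //=.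
all: rewrite ?e1 ?e2' ?e3 ?hGd; field; by rewrite ?hGn.
Qed.

Lemma sq_pos (y : R) : y != 0 -> 0 < y ^+ 2.
Proof. by move=> hy; rewrite lt_def sqrf_eq0 hy sqr_ge0. Qed.

Lemma chain_pos (p q r : R) : 0 < p * q -> 0 < q * r -> 0 < p * r.
Proof.
move=> h1 h2; have hq : q != 0 by apply: contraTneq h1 => ->; rewrite mulr0 ltxx.
have -> : p * r = (p * q) * (q * r) / q ^+ 2 by field.
by apply: divr_gt0; [exact: mulr_gt0 | exact: sq_pos].
Qed.

Lemma sym_construct : exists (N : 'I_4 -> 'I_4 -> R) (lam : 'I_4 -> R),
  [/\ (forall i j, N i j = N j i), (forall i, N i i = 0),
  (forall i j, i != j -> N i j < 0), (forall i, lam i != 0) &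
  (forall i j, c j * G i j = lam i * N i j)].
Proof.
have [mu [hmu hsym]] := mu_exists.
pose x i j := c i * c j * (G i j / mu i).
have xsym : forall i j, x i j = x j i.
  by move=> i j; rewrite /x hsym; ring.
have xpos : forall m j k, j != m -> k != m -> 0 < x m j * x m k.
  move=> m j k hj hk.
  have -> : x m j * x m k = (c m / mu m)^+2 * ((c j * G m j) * (c k * G m k)).
    by rewrite /x; field.
  by rewrite mulr_gt0 ?hsg // sq_pos // mulf_neq0 ?invr_eq0.
have x01 : forall i j, i != j -> 0 < x o0 o1 * x i j.
  move=> i j.
  case: (ord4_cases i) => [->|[->|[->|->]]]; case: (ord4_cases j) => [->|[->|[->|->]]] // _.
  all: try first [ exact: (xpos o0 o1 o1 isT isT) | exact: (xpos o0 o1 o2 isT isT)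
     | exact: (xpos o0 o1 o3 isT isT)
     | (rewrite [x o1 o0]xsym; exact: (xpos o0 o1 o1 isT isT))
     | (rewrite [x o0 o1]xsym; exact: (xpos o1 o0 o2 isT isT))
     | (rewrite [x o0 o1]xsym; exact: (xpos o1 o0 o3 isT isT))
     | (rewrite [x o2 o0]xsym; exact: (xpos o0 o1 o2 isT isT))
     | (rewrite [x o3 o0]xsym; exact: (xpos o0 o1 o3 isT isT))
     | (rewrite [x o0 o1]xsym [x o2 o1]xsym; exact: (xpos o1 o0 o2 isT isT))
     | (rewrite [x o0 o1]xsym [x o3 o1]xsym; exact: (xpos o1 o0 o3 isT isT))
     | (apply: (@chain_pos _ (x o0 o2)); [exact: (xpos o0 o1 o2 isT isT) |
          rewrite [x o0 o2]xsym ?[x o3 o2]xsym; exact: (xpos o2 o0 o3 isT isT)]) ].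

pose eps : R := if 0 < x o0 o1 then 1 else -1.
exists (fun i j => - eps * x i j), (fun i => - eps * mu i / c i).
split.
- by move=> i j; rewrite xsym.
- by move=> i; rewrite /x hGd; ring.
- move=> i j hij; have h := x01 i j hij; rewrite /eps; case: ifP => hp.
  - rewrite mulN1r oppr_lt0; by rewrite pmulr_rgt0 in h.
  - move/negbT: hp; rewrite -leNgt => hp.
    rewrite opprK mul1r; nra.
- move=> i; rewrite /eps; case: ifP => _.
  - by rewrite !mulf_neq0 ?invr_eq0 ?oppr_eq0 ?oner_neq0.
  - by rewrite !mulf_neq0 ?invr_eq0 ?oppr_eq0 ?opprK ?oner_neq0.
- move=> i j; rewrite /x /eps; case: ifP => _; field; by rewrite ?hmu ?hc.
Qed.
End PartD.
Section PartE.
Variable R : rcfType.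
Variables (v eta : 'I_4 -> 'rV[R]_4) (c : 'I_4 -> R) (N : 'I_4 -> 'I_4 -> R) (lam : 'I_4 -> R).
Hypotheses (hc : forall m, c m != 0) (hW : Wm v c \in unitmx)
  (hNs : forall i j, N i j = N j i) (hNd : forall i, N i i = 0)
  (hNn : forall i j, i != j -> N i j < 0) (hlam : forall i, lam i != 0)
  (hrel : forall i j, c j * ev v eta i j = lam i * N i j).

Let W := Wm v c.
Let Wi := invmx W.
Definition Nm : 'M[R]_4 := \matrix_(i, j) N i j.
Definition Bc : 'M[R]_4 := Wi *m Nm *m Wi^T.

Lemma ee_entry (M : 'M[R]_4) i j : ((delta_mx 0 i : 'rV[R]_4) *m M *m (delta_mx 0 j : 'rV[R]_4)^T) 0 0 = M i j.
Proof. by rewrite -rowE trmx_delta -colE !mxE. Qed.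

Lemma trZ (a : R) (x : 'rV[R]_4) : (a *: x)^T = a *: x^T.
Proof. by apply/matrixP => i j; rewrite !mxE. Qed.

Lemma scal_bil (a b : R) (x y : 'rV[R]_4) (M : 'M[R]_4) :
  ((a *: x) *m M *m (b *: y)^T) 0 0 = a * b * (x *m M *m y^T) 0 0.
Proof. by rewrite trZ -scalemxAl -scalemxAr -scalemxAl !mxE mulrA [b * a]mulrC. Qed.

Lemma bformE x y : bform Bc x y = ((x *m Wi) *m Nm *m (y *m Wi)^T) 0 0.
Proof. by rewrite /bform /Bc trmx_mul !mulmxA. Qed.

Lemma rowW m : 'e_m *m W = c m *: v m.
Proof. by rewrite -rowE; apply/rowP => k; rewrite !mxE. Qed.

Lemma vWi m : v m *m Wi = (c m)^-1 *: 'e_m.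
Proof.
have -> : v m = (c m)^-1 *: ('e_m *m W) by rewrite rowW scalerA mulVf // scale1r.
by rewrite -scalemxAl mulmxK.
Qed.

Lemma Nm_sym : Nm^T = Nm.
Proof. by apply/matrixP => i j; rewrite !mxE hNs. Qed.

Lemma Bc_sym : Bc^T = Bc.
Proof. by rewrite /Bc !trmx_mul trmxK Nm_sym mulmxA. Qed.

Lemma bform_v i j : bform Bc (v i) (v j) = (c i)^-1 * (c j)^-1 * N i j.
Proof. by rewrite bformE !vWi scal_bil ee_entry mxE. Qed.

Lemma WtWit : W^T *m Wi^T = 1%:M.
Proof. by rewrite -trmx_mul mulVmx // trmx1. Qed.

Lemma vB m : v m *m Bc = (c m)^-1 *: ('e_m *m Nm *m Wi^T).
Proof. by rewrite /Bc !mulmxA vWi -!scalemxAl. Qed.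

Lemma eta_row m : eta m *m W^T = lam m *: ('e_m *m Nm).
Proof.
apply/rowP => k; rewrite Wm_entry mxE -rowE !mxE.
by rewrite hrel.
Qed.

Lemma Bc_inscribed : inscribed_in Bc v eta.
Proof.
split; [|split; [|split]].
- exists c; split => // a ha.
  set ar : 'rV[R]_4 := \row_k a k.
  have -> : tpoint v c a = ar *m W.
    rewrite mulmx_sum_row /tpoint; apply: eq_bigr => k _.
    by rewrite rowE rowW mxE scalerA.
  rewrite bformE mulmxK //.
  rewrite !mxE !sum4 !mxE !sum4 /= !mxE /=.
  have hN : forall i j, i != j -> a i * a j * N i j < 0.
    by move=> i j hij; rewrite pmulr_rlt0 ?mulr_gt0 ?hNn.
  have t01 := hN o0 o1 isT. have t02 := hN o0 o2 isT. have t03 := hN o0 o3 isT.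
  have t12 := hN o1 o2 isT. have t13 := hN o1 o3 isT. have t23 := hN o2 o3 isT.
  rewrite !hNd (hNs o1 o0) (hNs o2 o0) (hNs o3 o0) (hNs o2 o1) (hNs o3 o1) (hNs o3 o2).
  set A0 := a o0 in t01 t02 t03 *. set A1 := a o1 in t01 t12 t13 *.
  set A2 := a o2 in t02 t12 t23 *. set A3 := a o3 in t03 t13 t23 *.
  set n01 := N o0 o1 in t01 *. set n02 := N o0 o2 in t02 *. set n03 := N o0 o3 in t03 *.
  set n12 := N o1 o2 in t12 *. set n13 := N o1 o3 in t13 *. set n23 := N o2 o3 in t23 *.
  have -> : (A0 * 0 + A1 * n01 + A2 * n02 + A3 * n03) * A0 +
     (A0 * n01 + A1 * 0 + A2 * n12 + A3 * n13) * A1 +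
     (A0 * n02 + A1 * n12 + A2 * 0 + A3 * n23) * A2 +
     (A0 * n03 + A1 * n13 + A2 * n23 + A3 * 0) * A3 =
     2 * (A0 * A1 * n01 + A0 * A2 * n02 + A0 * A3 * n03 + A1 * A2 * n12 + A1 * A3 * n13 + A2 * A3 * n23).
    by ring.
  lra.
- by move=> m; rewrite bform_v hNd mulr0.
- move=> m; rewrite vB scaler_eq0 invr_eq0 negb_or hc /=.
  apply/negP => /eqP h0.
  have h1 : (delta_mx 0 m : 'rV[R]_4) *m Nm = 0.
    have := congr1 (fun M => M *m W^T) h0 => /=.
    by rewrite mul0mx -mulmxA -trmx_mul mulmxV // trmx1 mulmx1.
  pose k := if m == o0 then o1 else o0.
  have hk : m != k by rewrite /k; case: ifP => h; [move/eqP: h => -> | rewrite h].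
  have := hNn hk; move/eqP: h1 => /eqP /rowP /(_ k).
  by rewrite -rowE !mxE => ->; rewrite ltxx.
- move=> m; exists (lam m * c m); split; first by rewrite mulf_neq0.
  have -> : eta m = eta m *m W^T *m Wi^T by rewrite -mulmxA WtWit mulmx1.
  by rewrite eta_row vB scalerA mulfK ?hc // -scalemxAl.
Qed.

Lemma perm_neq (s : {perm 'I_4}) (x y : 'I_4) : x != y -> s x != s y.
Proof. by rewrite (inj_eq perm_inj). Qed.

Lemma Bc_sig (s : {perm 'I_4}) :
  let Dl := Dlt (- N (s o0) (s o1)) (- N (s o0) (s o2)) (- N (s o0) (s o3))
               (- N (s o1) (s o2)) (- N (s o1) (s o3)) (- N (s o2) (s o3)) in
  (Dl < 0 -> has_signature Bc 3 1) /\ (0 < Dl -> has_signature Bc 2 2) /\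
  (Dl = 0 -> has_signature Bc 2 1).
Proof.
move=> Dl.
have hperm : perm_mx s *m Nm *m (perm_mx s)^T =
   Nmx (- N (s o0) (s o1)) (- N (s o0) (s o2)) (- N (s o0) (s o3))
               (- N (s o1) (s o2)) (- N (s o1) (s o3)) (- N (s o2) (s o3)).
  rewrite tr_perm_mx -col_permE -row_permE; apply/matrixP => x y.
  rewrite /Nmx /mx4 !mxE.
  case: (ord4_cases x) => [->|[->|[->|->]]]; case: (ord4_cases y) => [->|[->|[->|->]]] /=; by rewrite ?opprK ?hNd // hNs.
have pos : forall x y, x != y -> 0 < - N (s x) (s y).
  by move=> x y hxy; rewrite oppr_gt0 hNn // perm_neq.
have [h1 [h2 h3]] := sig_main (- N (s o0) (s o3)) (- N (s o1) (s o3)) (- N (s o2) (s o3))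
   (pos o0 o1 isT) (pos o0 o2 isT) (pos o1 o2 isT).
have key : forall U D, U \in unitmx -> U *m Nmx (- N (s o0) (s o1)) (- N (s o0) (s o2)) (- N (s o0) (s o3))
               (- N (s o1) (s o2)) (- N (s o1) (s o3)) (- N (s o2) (s o3)) *m U^T = D ->
    exists P : 'M[R]_4, P \in unitmx /\ P *m Bc *m P^T = D.
  move=> U D hU hUD; exists (U *m perm_mx s *m W); split.
    by rewrite !unitmx_mul hU unitmx_perm hW.
  rewrite -hUD -hperm /Bc !trmx_mul !mulmxA mulmxK // trmx_inv mulmxKV ?unitmx_tr //.
split; [|split].
- by move=> hD; case: (h1 hD) => U [hU hUD]; split; [exact: Bc_sym | exact: key hU hUD].
- by move=> hD; case: (h2 hD) => U [hU hUD]; split; [exact: Bc_sym | exact: key hU hUD].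
- by move=> hD; case: (h3 hD) => U [hU hUD]; split; [exact: Bc_sym | exact: key hU hUD].
Qed.
End PartE.
Section PartF.
Variable R : rcfType.
Variables (v eta : 'I_4 -> 'rV[R]_4).
Variables (lm kk : 'I_4 -> R) (M : 'I_4 -> 'I_4 -> R).
Hypotheses (hlm : forall i, lm i != 0) (hkk : forall i, kk i != 0)
  (hMs : forall i j, M i j = M j i) (hMn : forall i j, i != j -> M i j != 0)
  (hform : forall i j, ev v eta i j = lm i * M i j * kk j).

Section S.
Variable s : {perm 'I_4}.
Let i := s o0. Let j := s o1. Let k := s o2. Let l := s o3.
Let nij : M i j != 0. Proof. by rewrite hMn // perm_neq. Qed.
Let nik : M i k != 0. Proof. by rewrite hMn // perm_neq. Qed.
Let nil : M i l != 0. Proof. by rewrite hMn // perm_neq. Qed.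
Let njk : M j k != 0. Proof. by rewrite hMn // perm_neq. Qed.
Let njl : M j l != 0. Proof. by rewrite hMn // perm_neq. Qed.
Let nkl : M k l != 0. Proof. by rewrite hMn // perm_neq. Qed.

Lemma form_t : t_sigma v eta s = 1.
Proof.
rewrite /t_sigma /triple_ratio !hform -/i -/j -/k.
rewrite [M j i]hMs [M k i]hMs [M k j]hMs.
by field; rewrite ?hlm ?hkk ?nij ?nik ?njk.
Qed.

Lemma form_e : e_sigma v eta s = e_op v eta s.
Proof.
rewrite /e_sigma /e_op /edge_ratio !hform -/i -/j -/k -/l.
rewrite ?[M j i]hMs ?[M k i]hMs ?[M k j]hMs ?[M l i]hMs ?[M l j]hMs ?[M l k]hMs.
by field; rewrite ?hlm ?hkk ?nij ?nik ?nil ?njk ?njl ?nkl.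
Qed.

Lemma form_j : j_sigma v eta s * (4 * (M i l * M j k) ^+ 2) =
  - Dlt (- M i j) (- M i k) (- M i l) (- M j k) (- M j l) (- M k l).
Proof.
rewrite /j_sigma /X_sigma form_t /mu_sigma /e_sigma /e_plus /e_minus /edge_ratio /Dlt.
rewrite !hform -/i -/j -/k -/l.
rewrite ?[M j i]hMs ?[M k i]hMs ?[M k j]hMs ?[M l i]hMs ?[M l j]hMs ?[M l k]hMs.
by field; rewrite ?hlm ?hkk ?nij ?nik ?nil ?njk ?njl ?nkl.
Qed.
End S.
End PartF.
Section PartG.
Variable R : rcfType.

Definition p1 : {perm 'I_4} := (tperm o0 o1 * tperm o0 o2)%g.
Definition p2 : {perm 'I_4} := (tperm o0 o1 * tperm o0 o3)%g.
Definition r1 : {perm 'I_4} := (tperm o1 o2 * tperm o1 o3)%g.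
Definition r2 : {perm 'I_4} := (tperm o1 o3 * tperm o1 o2)%g.

Lemma even_p1 : ~~ odd_perm p1. Proof. by rewrite /p1 odd_permM !odd_tperm. Qed.
Lemma even_p2 : ~~ odd_perm p2. Proof. by rewrite /p2 odd_permM !odd_tperm. Qed.
Lemma even_r1 : ~~ odd_perm r1. Proof. by rewrite /r1 odd_permM !odd_tperm. Qed.
Lemma even_r2 : ~~ odd_perm r2. Proof. by rewrite /r2 odd_permM !odd_tperm. Qed.
Lemma even1 : ~~ odd_perm (1%g : {perm 'I_4}). Proof. by rewrite odd_perm1. Qed.
Lemma even_comp (p s : {perm 'I_4}) : ~~ odd_perm p -> ~~ odd_perm s -> ~~ odd_perm (p * s)%g.
Proof. by rewrite odd_permM => /negbTE -> /negbTE ->. Qed.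

Lemma alg3 (gij gik gil gji gjk gjl gki gkj gkl gli glj glk : R) :
  gij != 0 -> gik != 0 -> gil != 0 -> gji != 0 -> gjk != 0 -> gjl != 0 ->
  gki != 0 -> gkj != 0 -> gkl != 0 -> gli != 0 -> glj != 0 -> glk != 0 ->
  gik*gjl/(gil*gjk) = glj*gki/(gli*gkj) ->
  gji*gkl/(gjl*gki) = glk*gij/(glj*gik) ->
  gjk*gli/(gji*glk) = gil*gkj/(gij*gkl) ->
  0 < gij*gjk*gki/(gik*gji*gkj) ->
  gij*gjk*gki/(gik*gji*gkj) = 1.
Proof.
move=> h1 h2 h3 h4 h5 h6 h7 h8 h9 h10 h11 h12 E1 E2 E3 hpos.
set x := gij*gjk*gki/(gik*gji*gkj) in hpos *.
set y := gji*gil*glj/(gjl*gij*gli).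
set z := gkj*gjl*glk/(gkl*gjk*glj).
have hxy : x * y = 1.
  have -> : x * y = (glj*gki/(gli*gkj)) / (gik*gjl/(gil*gjk)) by rewrite /x /y; field; rewrite ?h1 ?h2 ?h3 ?h4 ?h5 ?h6 ?h7 ?h8 ?h9 ?h10 ?h11 ?h12.
  by rewrite -E1 divff //; apply: mulf_neq0; [apply: mulf_neq0 | rewrite invr_eq0; apply: mulf_neq0] => //.
have hxz : x * z = 1.
  have -> : x * z = (glk*gij/(glj*gik)) / (gji*gkl/(gjl*gki)) by rewrite /x /z; field; rewrite ?h1 ?h2 ?h3 ?h4 ?h5 ?h6 ?h7 ?h8 ?h9 ?h10 ?h11 ?h12.
  by rewrite -E2 divff //; apply: mulf_neq0; [apply: mulf_neq0 | rewrite invr_eq0; apply: mulf_neq0] => //.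
have hyz : y * z = 1.
  have -> : y * z = (gil*gkj/(gij*gkl)) / (gjk*gli/(gji*glk)) by rewrite /y /z; field; rewrite ?h1 ?h2 ?h3 ?h4 ?h5 ?h6 ?h7 ?h8 ?h9 ?h10 ?h11 ?h12.
  by rewrite -E3 divff //; apply: mulf_neq0; [apply: mulf_neq0 | rewrite invr_eq0; apply: mulf_neq0] => //.
have hx2 : x * x = 1.
  have hyz0 : y * z != 0 by rewrite hyz oner_neq0.
  have : (y != 0) && (z != 0) by rewrite -negb_or -mulf_eq0.
  case/andP => hy0 hz0.
  have -> : x * x = (x * y) * (x * z) / (y * z) by field; rewrite ?hy0 ?hz0.
  by rewrite hxy hxz hyz mulr1 invr1 mulr1.
have h0 : (x - 1) * (x + 1) = 0.
  have -> : (x - 1) * (x + 1) = x * x - 1 by ring.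
  by rewrite hx2 subrr.
move/eqP: h0; rewrite mulf_eq0 => /orP[/eqP h|/eqP h].
- by apply/eqP; rewrite -subr_eq0 h.
- exfalso; have : 0 < x + 1 by rewrite addr_gt0 // ltr01.
  by rewrite h ltxx.
Qed.

Lemma alg_pos (ci cj ck gij gik gji gjk gki gkj : R) :
  ci != 0 -> cj != 0 -> ck != 0 -> gik != 0 -> gji != 0 -> gkj != 0 ->
  0 < (cj * gij) * (ck * gik) -> 0 < (ck * gjk) * (ci * gji) -> 0 < (ci * gki) * (cj * gkj) ->
  0 < gij*gjk*gki/(gik*gji*gkj).
Proof.
move=> h1 h2 h3 h4 h5 h6 P1 P2 P3.
have -> : gij*gjk*gki/(gik*gji*gkj) =
   ((cj * gij) * (ck * gik)) * ((ck * gjk) * (ci * gji)) * ((ci * gki) * (cj * gkj)) /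
   (ci * cj * ck * gik * gji * gkj) ^+ 2 by field; rewrite ?h1 ?h2 ?h3 ?h4 ?h5 ?h6.
apply: divr_gt0; first by apply: mulr_gt0; [apply: mulr_gt0|].
by apply: sq_pos; rewrite !mulf_neq0.
Qed.

Variables v eta : 'I_4 -> 'rV[R]_4.
Hypothesis htet : tetra_of_flags v eta.

Let gnz x y : x != y -> ev v eta x y != 0 := @G_nz R v eta htet x y.

Lemma P3_to_P2 :
  (forall s : {perm 'I_4}, ~~ odd_perm s -> e_sigma v eta s = e_op v eta s) ->
  forall s : {perm 'I_4}, ~~ odd_perm s -> t_sigma v eta s = 1.
Proof.
move=> H3 s hs.
have E1 := H3 s hs.
have E2 := H3 _ (even_comp even_p1 hs).
have E3 := H3 _ (even_comp even_p2 hs).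
rewrite /e_sigma /e_op /edge_ratio /p1 /p2 !permM !permE /= in E1 E2 E3.
have [c [hc hsg]] := tetra_signs htet.
have pn : forall x y : 'I_4, x != y -> s x != s y := @perm_neq s.
rewrite /t_sigma /triple_ratio.
apply: (alg3 _ _ _ _ _ _ _ _ _ _ _ _ E1 E2 E3); try (by apply: gnz; apply: pn).
apply: (@alg_pos (c (s o0)) (c (s o1)) (c (s o2))) => //; try (by apply: gnz; apply: pn).
- by apply: hsg; rewrite eq_sym; apply: pn.
- by apply: hsg; [|rewrite eq_sym]; apply: pn.
- by apply: hsg; apply: pn.
Qed.

Lemma insc_form : inscribed_tetra v eta ->
  exists (lm : 'I_4 -> R) (M : 'I_4 -> 'I_4 -> R),
   [/\ (forall i, lm i != 0), (forall i j, M i j = M j i),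
       (forall i j, i != j -> M i j != 0) &
       (forall i j, ev v eta i j = lm i * M i j * 1)].
Proof.
have gen : forall B, B^T = B -> inscribed_in B v eta -> exists (lm : 'I_4 -> R) (M : 'I_4 -> 'I_4 -> R),
   [/\ (forall i, lm i != 0), (forall i j, M i j = M j i),
       (forall i j, i != j -> M i j != 0) &
       (forall i j, ev v eta i j = lm i * M i j * 1)].
  move=> B hB [_ [_ [_ hl]]].
  have [lm hlm] := fin_all_exists hl.
  have hev : forall i j, ev v eta i j = lm i * bform B (v i) (v j) * 1.
    move=> i j; rewrite /ev /pair /bform; case: (hlm i) => _ ->.
    by rewrite -scalemxAl mxE mulr1.
  exists lm, (fun i j => bform B (v i) (v j)); split.
  - by move=> i; case: (hlm i).
  - move=> i j; rewrite /bform.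
    transitivity ((v i *m B *m (v j)^T)^T 0 0); first by rewrite [RHS]mxE.
    by rewrite !trmx_mul trmxK hB mulmxA.
  - move=> i j hij; have := gnz hij; rewrite hev.
    by apply: contra => /eqP ->; rewrite mulr0 mul0r.
  - exact: hev.
case=> [[B [[hB _] hI]]|[[B [[hB _] hI]]|[B [[hB _] hI]]]]; exact: gen hI.
Qed.

Lemma I_to_P2 : inscribed_tetra v eta ->
  forall s : {perm 'I_4}, ~~ odd_perm s -> t_sigma v eta s = 1.
Proof.
move=> /insc_form [lm [M [h1 h2 h3 h4]]] s _.
exact: (@form_t R v eta lm (fun _ => 1) M h1 (fun _ => oner_neq0 R) h2 h3 h4 s).
Qed.

Lemma I_to_P3 : inscribed_tetra v eta ->
  forall s : {perm 'I_4}, ~~ odd_perm s -> e_sigma v eta s = e_op v eta s.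
Proof.
move=> /insc_form [lm [M [h1 h2 h3 h4]]] s _.
exact: (@form_e R v eta lm (fun _ => 1) M h1 (fun _ => oner_neq0 R) h2 h3 h4 s).
Qed.

Lemma P2_main : (forall s : {perm 'I_4}, ~~ odd_perm s -> t_sigma v eta s = 1) ->
  forall s : {perm 'I_4}, ~~ odd_perm s ->
       (0 < j_sigma v eta s -> inscribed_hyperbolic v eta) /\
       (j_sigma v eta s < 0 -> inscribed_AdS v eta) /\
       (j_sigma v eta s = 0 -> inscribed_halfpipe v eta).
Proof.
move=> H2 s hs.
have [c [hc hsg]] := tetra_signs htet.
have ht : forall p : {perm 'I_4}, ~~ odd_perm p ->
    Tr (ev v eta) (p o0) (p o1) (p o2) = 1.
  by move=> p hp; have := H2 p hp.
have ht1 : Tr (ev v eta) o0 o1 o2 = 1 by have := ht 1%g even1; rewrite !perm1.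
have ht2 : Tr (ev v eta) o0 o2 o3 = 1 by have := ht _ even_r1; rewrite /r1 !permM !permE.
have ht3 : Tr (ev v eta) o0 o3 o1 = 1 by have := ht _ even_r2; rewrite /r2 !permM !permE.
have [N [lam [hNs hNd hNn hlam hrel]]] :=
  sym_construct (G_diag htet) gnz hc hsg ht1 ht2 ht3.
have hW := Wm_unit htet hc.
have hI := Bc_inscribed hc hW hNs hNd hNn hlam hrel.
have [s1 [s2 s3]] := Bc_sig hW hNs hNd hNn s.
have hform : forall i j, ev v eta i j = lam i * N i j * (c j)^-1.
  by move=> i j; rewrite -hrel; field.
have hNn' : forall i j, i != j -> N i j != 0 by move=> i j hij; rewrite lt_eqF ?hNn.
have hj := form_j hlam (fun y => invr_neq0 (hc y)) hNs hNn' hform s.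
have hsq : 0 < 4 * (N (s o0) (s o3) * N (s o1) (s o2)) ^+ 2.
  by rewrite mulr_gt0 // sq_pos // mulf_neq0 // hNn' // perm_neq.
set Dl := Dlt _ _ _ _ _ _ in hj s1 s2 s3.
split; [|split].
- move=> hj0; exists (Bc v c N); split => //; apply: s1.
  have : 0 < - Dl by rewrite -hj mulr_gt0.
  by rewrite oppr_gt0.
- move=> hj0; exists (Bc v c N); split => //; apply: s2.
  have : - Dl < 0 by rewrite -hj pmulr_llt0.
  by rewrite oppr_lt0.
- move=> hj0; exists (Bc v c N); split => //; apply: s3.
  by apply: oppr_inj; rewrite -hj hj0 mul0r oppr0.
Qed.

Lemma P2_to_I : (forall s : {perm 'I_4}, ~~ odd_perm s -> t_sigma v eta s = 1) ->
  inscribed_tetra v eta.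
Proof.
move=> H2; have [h1 [h2 h3]] := P2_main H2 even1.
rewrite /inscribed_tetra.
case: (ltrgtP (j_sigma v eta 1%g) 0) => hj.
- by right; left; apply: h2.
- by left; apply: h1.
- by right; right; apply: h3.
Qed.
End PartG.

Theorem theorem5p3 (R : rcfType) (v eta : 'I_4 -> 'rV[R]_4) :
  tetra_of_flags v eta ->
  (inscribed_tetra v eta <->
     (forall s : {perm 'I_4}, ~~ odd_perm s -> t_sigma v eta s = 1)) /\
  (inscribed_tetra v eta <->
     (forall s : {perm 'I_4}, ~~ odd_perm s -> e_sigma v eta s = e_op v eta s)) /\
  (inscribed_tetra v eta ->
     forall s : {perm 'I_4}, ~~ odd_perm s ->
       (0 < j_sigma v eta s -> inscribed_hyperbolic v eta) /\
       (j_sigma v eta s < 0 -> inscribed_AdS v eta) /\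
       (j_sigma v eta s = 0 -> inscribed_halfpipe v eta)).
Proof.
move=> htet.
split; [split|split; [split|]].
- exact: I_to_P2.
- exact: P2_to_I.
- exact: I_to_P3.
- by move=> H3; apply: (P2_to_I htet); apply: P3_to_P2.
- by move=> hI; apply: P2_main => //; apply: I_to_P2.
Qed.
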